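(* A graph $G$ admits a proper straight-line drawing with spanning ratio equal to $1$ if and only if $G$ is a point visibility graph.
   Context: A drawing of a graph maps each vertex to a distinct point of the plane and each edge to a Jordan arc between its end-vertices; it is straight-line if every edge is drawn as the straight-line segment between its end-vertices. A straight-line drawing is proper if no two vertices coincide and no edge contains a vertex other than its end-vertices. In a straight-line drawing $\Gamma$, the length of a path is the sum of the Euclidean lengths of its edges, $\pi_\Gamma(u,v)$ is the minimum length of a path between $u$ and $v$, and $\|uv\|_\Gamma$ is the Euclidean distance between $u$ and $v$. The spanning ratio of $\Gamma$ is $\max_{u\neq v}\pi_\Gamma(u,v)/\|uv\|_\Gamma$. A graph $G$ is a point visibility graph if there is a finite point set $P\subset\mathbb R^2$ such that $G$ has one vertex per point of $P$ and two vertices are adjacent if and only if the open straight-line segment between the corresponding points contains no point of $P$. *)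

(* Defs.v *)
From HB Require Import structures.
From mathcomp Require Import all_boot all_order all_algebra.
From mathcomp Require Import classical_sets boolp reals constructive_ereal ereal.
Set Implicit Arguments. Unset Strict Implicit. Unset Printing Implicit Defensive.
Import Order.TTheory GRing.Theory Num.Theory.
Local Open Scope ring_scope.
Local Open Scope classical_set_scope.

Section Defs.
Variable R : realType.

Definition pt2 := (R * R)%type.

Definition edist (p q : pt2) : R :=
  Num.sqrt ((p.1 - q.1) ^+ 2 + (p.2 - q.2) ^+ 2).

Definition on_open_seg (p q r : pt2) : Prop :=
  exists t : R, 0 < t < 1 /\ r.1 = p.1 + t * (q.1 - p.1)
                          /\ r.2 = p.2 + t * (q.2 - p.2).

Variables (T : finType) (e : rel T).

(* A straight-line drawing of the graph (T, e) is determined by the position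
   of its vertices; each edge uv is drawn as the segment pos u -- pos v. *)
Definition proper_drawing (pos : T -> pt2) : Prop :=
  injective pos /\
  (forall u v w, e u v -> w != u -> w != v -> ~ on_open_seg (pos u) (pos v) (pos w)).

Fixpoint walk_length (pos : T -> pt2) (x : T) (s : seq T) : R :=
  match s with
  | [::] => 0
  | y :: s' => edist (pos x) (pos y) + walk_length pos y s'
  end.

(* s is (the tail of) a path from u to v in (T, e): consecutive vertices
   adjacent, no repeated vertex *)
Definition is_path_from_to (u v : T) (s : seq T) : bool :=
  [&& path e u s, last u s == v & uniq (u :: s)].

(* pi_Gamma(u,v): minimum length of a path from u to v (+oo if none) *)
Definition pi_dist (pos : T -> pt2) (u v : T) : \bar R :=
  ereal_inf [set (walk_length pos u s)%:E | s in [set s | is_path_from_to u v s]].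

(* spanning ratio: max over u <> v of pi(u,v) / ||uv||.
   Convention: a graph with fewer than two vertices has spanning ratio 1. *)
Definition spanning_ratio (pos : T -> pt2) : \bar R :=
  if (#|T| <= 1)%N then 1%E
  else ereal_sup [set (pi_dist pos uv.1 uv.2 * ((edist (pos uv.1) (pos uv.2))^-1)%:E)%E
                 | uv in [set uv : T * T | uv.1 != uv.2]].

(* (T, e) is (isomorphic to) the visibility graph of a finite pt2 set P:
   P = image of the injective map pos, and u v adjacent iff the open segment
   between pos u and pos v contains no pt2 of P. *)
Definition is_point_visibility_graph : Prop :=
  exists pos : T -> pt2, injective pos /\
    forall u v, e u v <-> (u != v /\ forall w, ~ on_open_seg (pos u) (pos v) (pos w)).

End Defs.

(* Main.v *)
Require Import Defs.
From HB Require Import structures.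
From mathcomp Require Import all_boot all_order all_algebra.
From mathcomp Require Import classical_sets boolp reals constructive_ereal ereal.
From mathcomp Require Import ring lra.
Set Implicit Arguments. Unset Strict Implicit. Unset Printing Implicit Defensive.
Import Order.TTheory GRing.Theory Num.Theory.
Local Open Scope ring_scope.
Section G.
Variable R : realType.
Implicit Types p q r : pt2 R.

Lemma cs_key (a1 a2 b1 b2 x y : R) : 0 <= x -> 0 <= y ->
  x ^+ 2 = a1 ^+ 2 + a2 ^+ 2 -> y ^+ 2 = b1 ^+ 2 + b2 ^+ 2 ->
  a1 * b1 + a2 * b2 <= x * y.
Proof.
move=> x0 y0 hx hy.
have H : (a1 * b1 + a2 * b2) ^+ 2 <= (x * y) ^+ 2.
  rewrite exprMn hx hy; have := sqr_ge0 (a1 * b2 - a2 * b1); nra.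
have xy0 : 0 <= x * y by apply: mulr_ge0.
rewrite leNgt; apply/negP => hlt.
have : (x * y) ^+ 2 < (a1 * b1 + a2 * b2) ^+ 2 by nra.
by rewrite ltNge H.
Qed.

Lemma pt_neq p q : p != q -> 0 < (p.1 - q.1) ^+ 2 + (p.2 - q.2) ^+ 2.
Proof.
case: p q => [a b] [c d] /= H; rewrite lt_def addr_ge0 ?sqr_ge0 // andbT.
rewrite paddr_eq0 ?sqr_ge0 // !sqrf_eq0 !subr_eq0; apply/negP => /andP[/eqP e1 /eqP e2].
by rewrite e1 e2 eqxx in H.
Qed.

Lemma edist_ge0 p q : 0 <= edist p q. Proof. exact: sqrtr_ge0. Qed.

Lemma edist_sqr p q : edist p q ^+ 2 = (p.1 - q.1) ^+ 2 + (p.2 - q.2) ^+ 2.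
Proof. by rewrite sqr_sqrtr // addr_ge0 ?sqr_ge0. Qed.

Lemma edist_sym p q : edist p q = edist q p.
Proof. by rewrite /edist -!(sqrrN (p.1 - _)) -(sqrrN (p.2 - _)) !opprB. Qed.

Lemma edist_gt0 p q : p != q -> 0 < edist p q.
Proof. by move=> H; rewrite sqrtr_gt0 pt_neq. Qed.

Lemma triangle p q r : edist p r <= edist p q + edist q r.
Proof.
have h0 : 0 <= edist p q + edist q r by rewrite addr_ge0 ?edist_ge0.
rewrite -(ger0_norm h0) -sqrtr_sqr ler_sqrt ?sqr_ge0 //.
have := cs_key (edist_ge0 p q) (edist_ge0 q r) (edist_sqr p q) (edist_sqr q r).
have := edist_sqr p q; have := edist_sqr q r.
move: (edist p q) (edist q r) => x y; nra.
Qed.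

Lemma seg_eq p q r : q != p -> q != r ->
  edist p q + edist q r <= edist p r -> on_open_seg p r q.
Proof.
move=> hqp hqr hle.
rewrite eq_sym in hqp; have x0 := edist_gt0 hqp.
have y0 := edist_gt0 hqr.
have := cs_key (edist_ge0 p q) (edist_ge0 q r) (edist_sqr p q) (edist_sqr q r).
have := edist_sqr p q; have := edist_sqr q r; have := edist_sqr p r.
have z0 := edist_ge0 p r.
move: hle x0 y0 z0.
move: (edist p q) (edist q r) (edist p r) => x y z.
case: p q r {hqp hqr} => [p1 p2] [q1 q2] [r1 r2] /=.
set a1 := p1 - q1; set a2 := p2 - q2; set b1 := q1 - r1; set b2 := q2 - r2.
have -> : p1 - r1 = a1 + b1 by rewrite /a1 /b1; ring.
have -> : p2 - r2 = a2 + b2 by rewrite /a2 /b2; ring.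
move=> hle x0 y0 z0 hz hy hx hcs.
have hdot : a1 * b1 + a2 * b2 = x * y.
  apply/le_anti; rewrite hcs /=.
  have : (x + y) ^+ 2 <= z ^+ 2 by rewrite ler_pXn2r // ?nnegrE ?addr_ge0 ?ltW.
  nra.
have hcr : a1 * b2 - a2 * b1 = 0.
  apply/eqP; rewrite -sqrf_eq0; apply/eqP.
  have : (a1 * b1 + a2 * b2) ^+ 2 = x ^+ 2 * y ^+ 2 by rewrite hdot exprMn.
  rewrite hx hy; nra.
have dpos : 0 < x * y by apply: mulr_gt0.
have A0 : 0 < x ^+ 2 by apply: exprn_gt0.
have B0 : 0 < y ^+ 2 by apply: exprn_gt0.
set N := a1 ^+ 2 + a2 ^+ 2 + x * y.
set D := z ^+ 2.
have D0 : 0 < D by rewrite /D hz; nra.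
have DN : D = N + (b1 ^+ 2 + b2 ^+ 2 + x * y) by rewrite /D /N hz -hdot; ring.
exists (N / D); split.
  have N0 : 0 < N by rewrite /N -hx; nra.
  have ND : N < D by rewrite DN -hy; nra.
  by rewrite divr_gt0 // ltr_pdivrMr // mul1r ND.
have Dn0 : D != 0 by rewrite gt_eqF.
have E1 : a1 * D = N * (a1 + b1).
  apply/eqP; rewrite -subr_eq0 DN /N -hdot.
  have -> : a1 * (a1 ^+ 2 + a2 ^+ 2 + (a1 * b1 + a2 * b2) + (b1 ^+ 2 + b2 ^+ 2 + (a1 * b1 + a2 * b2))) -
   (a1 ^+ 2 + a2 ^+ 2 + (a1 * b1 + a2 * b2)) * (a1 + b1) = (a2 + b2) * (a1 * b2 - a2 * b1) by ring.
  by rewrite hcr mulr0.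
have E2 : a2 * D = N * (a2 + b2).
  apply/eqP; rewrite -subr_eq0 DN /N -hdot.
  have -> : a2 * (a1 ^+ 2 + a2 ^+ 2 + (a1 * b1 + a2 * b2) + (b1 ^+ 2 + b2 ^+ 2 + (a1 * b1 + a2 * b2))) -
   (a1 ^+ 2 + a2 ^+ 2 + (a1 * b1 + a2 * b2)) * (a2 + b2) = - (a1 + b1) * (a1 * b2 - a2 * b1) by ring.
  by rewrite hcr mulr0.
split.
  rewrite /=; have -> : r1 - p1 = - (a1 + b1) by rewrite /a1 /b1; ring.
  rewrite mulrN mulrAC -E1 mulfK //; rewrite /a1; ring.
rewrite /=; have -> : r2 - p2 = - (a2 + b2) by rewrite /a2 /b2; ring.
rewrite mulrN mulrAC -E2 mulfK //; rewrite /a2; ring.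
Qed.

Definition onseg p q r (t : R) :=
  r.1 = p.1 + t * (q.1 - p.1) /\ r.2 = p.2 + t * (q.2 - p.2).

Lemma sqrt_scale (k u v : R) : 0 <= k ->
  Num.sqrt ((k * u) ^+ 2 + (k * v) ^+ 2) = k * Num.sqrt (u ^+ 2 + v ^+ 2).
Proof.
move=> k0; rewrite !exprMn -mulrDr sqrtrM ?sqr_ge0 // sqrtr_sqr ger0_norm //.
Qed.

Lemma seg_dist p q r t : 0 <= t <= 1 -> onseg p q r t ->
  edist p r = t * edist p q /\ edist r q = (1 - t) * edist p q.
Proof.
case/andP=> t0 t1 [e1 e2]; rewrite /edist e1 e2; split.
  rewrite -sqrt_scale //; congr Num.sqrt; congr (_ ^+ 2 + _ ^+ 2); ring.
rewrite -sqrt_scale ?subr_ge0 //; congr Num.sqrt; congr (_ ^+ 2 + _ ^+ 2); ring.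
Qed.

Lemma seg_dist_sum p q r t : 0 <= t <= 1 -> onseg p q r t ->
  edist p r + edist r q = edist p q.
Proof. by move=> ht hs; have [-> ->] := seg_dist ht hs; ring. Qed.

Lemma onseg_uniq p q r s s' : p != q -> onseg p q r s -> onseg p q r s' -> s = s'.
Proof.
move=> hpq [e1 e2] [e1' e2'].
have S0 := pt_neq hpq.
have h1 : (s - s') * (q.1 - p.1) = 0.
  by apply/eqP; rewrite mulrBl subr_eq0; apply/eqP; apply: (addrI p.1); rewrite -e1 -e1'.
have h2 : (s - s') * (q.2 - p.2) = 0.
  by apply/eqP; rewrite mulrBl subr_eq0; apply/eqP; apply: (addrI p.2); rewrite -e2 -e2'.
have h3 : (s - s') ^+ 2 * ((p.1 - q.1) ^+ 2 + (p.2 - q.2) ^+ 2) = 0.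
  have -> : (s - s') ^+ 2 * ((p.1 - q.1) ^+ 2 + (p.2 - q.2) ^+ 2)
     = ((s - s') * (q.1 - p.1)) ^+ 2 + ((s - s') * (q.2 - p.2)) ^+ 2 by ring.
  by rewrite h1 h2 expr0n /= addr0.
move: h3 => /eqP; rewrite mulf_eq0 (gt_eqF S0) orbF sqrf_eq0 subr_eq0.
by move/eqP.
Qed.

Lemma onseg0 p q : onseg p q p 0.
Proof. by split; rewrite mul0r addr0. Qed.

Lemma onseg1 p q : onseg p q q 1.
Proof. by split; rewrite mul1r addrC subrK. Qed.

Lemma onseg_eq p q r t : onseg p q r t -> r = (p.1 + t * (q.1 - p.1), p.2 + t * (q.2 - p.2)).
Proof. by case: r => a b [/= -> ->]. Qed.

Lemma open_seg_neq p q r : p != q -> on_open_seg p q r -> r != p /\ r != q.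
Proof.
move=> hpq [t [/andP[t0 t1] hs]]; split; apply/eqP => E; subst r.
  by have := onseg_uniq hpq hs (onseg0 p q) => E; rewrite E ltxx in t0.
by have := onseg_uniq hpq hs (onseg1 p q) => E; rewrite E ltxx in t1.
Qed.

Lemma onseg_comp1 p q w x tw s : onseg p q w tw -> onseg p w x s -> onseg p q x (s * tw).
Proof. by move=> [a1 a2] [b1 b2]; rewrite /onseg b1 b2 a1 a2; split; ring. Qed.

Lemma onseg_comp2 p q w x tw s : onseg p q w tw -> onseg w q x s ->
  onseg p q x (tw + s * (1 - tw)).
Proof. by move=> [a1 a2] [b1 b2]; rewrite /onseg b1 b2 a1 a2; split; ring. Qed.

Lemma onseg_pt p q r t : onseg p q r t -> p = q -> r = p.
Proof. by move=> hs E; subst q; rewrite (onseg_eq hs) !subrr !mulr0 !addr0; case: p {hs}. Qed.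

Lemma edist_refl p : edist p p = 0.
Proof. by rewrite /edist !subrr expr0n /= addr0 sqrtr0. Qed.

Section Graph.
Variables (T : finType) (e : rel T) (pos : T -> pt2 R).

Lemma walk_ge x s : edist (pos x) (pos (last x s)) <= walk_length pos x s.
Proof.
elim: s x => [|y s IH] x /=; first by rewrite edist_refl.
apply: le_trans (triangle _ (pos y) _) _; exact: lerD.
Qed.

Lemma walk_cat x s1 s2 :
  walk_length pos x (s1 ++ s2) = walk_length pos x s1 + walk_length pos (last x s1) s2.
Proof. by elim: s1 x => [|y s IH] x /=; rewrite ?add0r // IH addrA. Qed.

End Graph.

Section Vis.
Variables (T : finType) (e : rel T) (pos : T -> pt2 R).

Definition Sseg (u v : T) : {set T} :=
  [set x | `[< on_open_seg (pos u) (pos v) (pos x) >]].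

Lemma inSseg u v x : (x \in Sseg u v) <-> on_open_seg (pos u) (pos v) (pos x).
Proof. by rewrite inE; split => /asboolP. Qed.

Definition good_path u v s :=
  is_path_from_to e u v s /\ walk_length pos u s = edist (pos u) (pos v) /\
  (forall x, x \in s -> exists t, 0 < t <= 1 /\ onseg (pos u) (pos v) (pos x) t).

Lemma path_base u v : e u v -> u != v -> good_path u v [:: v].
Proof.
move=> huv nuv; split; first by rewrite /is_path_from_to /= huv eqxx mem_seq1 nuv.
split; first by rewrite /= addr0.
move=> x; rewrite inE => /eqP ->; exists 1; split; first by rewrite ltr01 lexx.
exact: onseg1.
Qed.

Lemma path_exists (pinj : injective pos)
  (hvis : forall u v, e u v <-> (u != v /\ forall w, ~ on_open_seg (pos u) (pos v) (pos w)))
  n u v : u != v -> (#|Sseg u v| <= n)%N -> exists s, good_path u v s.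
Proof.
elim: n u v => [|n IH] u v huv hcard;
  (case: (pselect (exists w, on_open_seg (pos u) (pos v) (pos w))) => [[w hw]|hno];
  last by exists [:: v]; apply: path_base => //; apply/hvis; split => // w hw; apply: hno; exists w).
  have : (0 < #|Sseg u v|)%N by apply/card_gt0P; exists w; apply/inSseg.
  by rewrite lt0n -leqn0 hcard.
have puv : pos u != pos v by rewrite (inj_eq pinj).
have [hwu hwv] := open_seg_neq puv hw.
have [tw [/andP[tw0 tw1] hsw]] := hw.
have nuw : u != w by apply: contraNneq hwu => ->.
have nwv : w != v by apply: contraNneq hwv => ->.
have card1 : (#|Sseg u w| <= n)%N.
  rewrite -ltnS; apply: leq_trans hcard; apply: proper_card; apply/properP; split.
    apply/fintype.subsetP => x /inSseg [s [/andP[s0 s1] hs]]; apply/inSseg.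
    exists (s * tw); split; last exact: onseg_comp1 hsw hs.
    by rewrite mulr_gt0 //= mulr_ilt1 // ltW.
  exists w; first by apply/inSseg.
  apply/negP => /inSseg /(open_seg_neq _) [].
    by rewrite eq_sym.
  by rewrite eqxx.
have card2 : (#|Sseg w v| <= n)%N.
  rewrite -ltnS; apply: leq_trans hcard; apply: proper_card; apply/properP; split.
    apply/fintype.subsetP => x /inSseg [s [/andP[s0 s1] hs]]; apply/inSseg.
    exists (tw + s * (1 - tw)); split; last exact: onseg_comp2 hsw hs.
    apply/andP; split; nra.
  exists w; first by apply/inSseg.
  apply/negP => /inSseg /(open_seg_neq _) [].
    by [].
  by rewrite eqxx.
have [s1 [hp1 [hlen1 hx1]]] := IH _ _ nuw card1.
have [s2 [hp2 [hlen2 hx2]]] := IH _ _ nwv card2.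
move: hp1 hp2 => /and3P[pa1 /eqP la1 ua1] /and3P[pa2 /eqP la2 ua2].
move: ua1 ua2 => /= /andP[nu1 ud1] /andP[nw2 ud2].
exists (s1 ++ s2); split.
  rewrite /is_path_from_to cat_path pa1 la1 pa2 last_cat la1 la2 eqxx /=.
  rewrite mem_cat cat_uniq negb_or nu1 ud1 ud2 /= andbT.
  apply/andP; split.
    apply/negP => /hx2 [t [/andP[t0 t1] ht]].
    have := onseg_uniq puv (onseg_comp2 hsw ht) (onseg0 _ _).
    move=> E; have : 0 < tw + t * (1 - tw) by nra.
    by rewrite E ltxx.
  apply/hasPn => x hx2'; apply/negP => hx1'.
  have [t1 [/andP[t10 t11] ht1]] := hx1 x hx1'.
  have [t2 [/andP[t20 t21] ht2]] := hx2 x hx2'.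
  have E := onseg_uniq puv (onseg_comp1 hsw ht1) (onseg_comp2 hsw ht2).
  have : t1 * tw < tw + t2 * (1 - tw) by nra.
  by rewrite E ltxx.
split.
  rewrite walk_cat la1 hlen1 hlen2; apply: seg_dist_sum hsw.
  by rewrite !ltW.
move=> x; rewrite mem_cat => /orP[/hx1|/hx2] [t [/andP[t0 t1] ht]].
  exists (t * tw); split; last exact: onseg_comp1 hsw ht.
  apply/andP; split; nra.
exists (tw + t * (1 - tw)); split; last exact: onseg_comp2 hsw ht.
apply/andP; split; nra.
Qed.
End Vis.
End G.

Local Open Scope classical_set_scope.

Theorem lemma2 (R : realType) (T : finType) (e : rel T)
    (e_sym : symmetric e) (e_irr : irreflexive e) :
  (exists pos : T -> pt2 R, proper_drawing e pos /\ spanning_ratio e pos = 1%E)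
  <-> is_point_visibility_graph R e.
Proof.
split.
- move=> [pos [[pinj hprop] hsr]]; exists pos; split => // u v; split.
  + move=> huv; have nuv : u != v by apply: contraTneq huv => ->; rewrite e_irr.
    split => // w hw; have puv : pos u != pos v by rewrite (inj_eq pinj).
    have [hwu hwv] := open_seg_neq puv hw.
    have nwu : w != u by apply: contraNneq hwu => ->.
    have nwv : w != v by apply: contraNneq hwv => ->.
    exact: hprop huv nwu nwv hw.
  + move=> [nuv hno]; case: (boolP (e u v)) => // neuv; exfalso.
    have puv : pos u != pos v by rewrite (inj_eq pinj).
    have dpos := edist_gt0 puv.
    set d := edist (pos u) (pos v) in dpos *.
    pose P := fun w => e u w && (w != v).
    pose g := fun w => edist (pos u) (pos w) + edist (pos w) (pos v) - d.
    have gpos : forall w, P w -> 0 < g w.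
      move=> w /andP[euw nwv]; rewrite /g subr_gt0 lt_neqAle triangle andbT.
      apply/negP => /eqP E; apply: (hno w); apply: seg_eq.
      + by rewrite (inj_eq pinj); apply: contraTneq euw => ->; rewrite e_irr.
      + by rewrite (inj_eq pinj).
      + by rewrite -E.
    pose delta := \big[Order.min/1]_(w | P w) g w.
    have d0 : 0 < delta.
      apply: (big_ind (fun x => 0 < x)); [exact: ltr01 | | exact: gpos].
      by move=> x y hx hy; rewrite lt_min hx hy.
    have dle : forall w, P w -> delta <= g w.
      by move=> w Pw; rewrite /delta (bigD1 w) //= ge_min lexx.
    have lb : ((d + delta)%:E <= pi_dist e pos u v)%E.
      apply/ereal_infP => y [s hs <-]; rewrite lee_fin.
      case: s hs => [|x s].
        by move=> /and3P[_ /= /eqP E _]; rewrite E eqxx in nuv.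
      move=> /and3P[/= /andP[eux ps] /eqP hl hu].
      have Px : P x.
        rewrite /P eux /=; apply/negP => /eqP xv; subst x.
        case: s ps hl hu => [|z s] ps hl hu; first by rewrite eux in neuv.
        move: hu; rewrite /= => /and3P[_ hv _].
        by move: hv; rewrite -{1}hl /= mem_last.
      have := walk_ge pos x s; rewrite hl => hw.
      move: (dle x Px) hw; rewrite /g /= => h1 h2; lra.
    have card : (1 < #|T|)%N by apply/card_gt1P; exists u, v.
    have : (pi_dist e pos u v * ((edist (pos u) (pos v))^-1)%:E <= 1)%E.
      rewrite -hsr /spanning_ratio leqNgt card /=; apply: ereal_sup_ubound.
      by exists (u, v).
    case E: (pi_dist e pos u v) => [r| |] in lb *.
    + rewrite -EFinM lee_fin -/d ler_pdivrMr // mul1r => hr.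
      move: lb; rewrite lee_fin; lra.
    + by rewrite gt0_mulye // lte_fin invr_gt0.
    + by [].
- move=> [pos [pinj hvis]]; exists pos; split.
    split => // u v w huv nwu nwv; exact: ((hvis u v).1 huv).2 w.
  have pid : forall u v, u != v -> pi_dist e pos u v = (edist (pos u) (pos v))%:E.
    move=> u v nuv; apply/le_anti/andP; split.
      have [s [hs [hl _]]] := path_exists pinj hvis nuv (leqnn _).
      by apply: ereal_inf_lbound; exists s => //; rewrite hl.
    apply/ereal_infP => y [s hs <-]; rewrite lee_fin.
    move: hs => /and3P[_ /eqP hl _]; rewrite -hl; exact: walk_ge.
  have dn0 : forall u v, u != v -> edist (pos u) (pos v) != 0.
    by move=> u v nuv; rewrite gt_eqF // edist_gt0 // (inj_eq pinj).
  rewrite /spanning_ratio; case: ifP => // card.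
  have -> : [set (pi_dist e pos uv.1 uv.2 * ((edist (pos uv.1) (pos uv.2))^-1)%:E)%E
                 | uv in [set uv : T * T | uv.1 != uv.2]] = [set 1%E].
    apply/seteqP; split => y.
      by move=> [[u v] /= nuv <-]; rewrite pid // -EFinM divff // dn0.
    move=> ->; have : (1 < #|T|)%N by rewrite ltnNge card.
    move=> /card_gt1P [u [v [_ _ nuv]]].
    by exists (u, v) => //=; rewrite pid // -EFinM divff // dn0.
  by rewrite ereal_sup1.
Qed.
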